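(* Let $G=\langle s_1,s_2\mid s_2s_2=s_2\rangle$ and $\mathcal{A}=\{1,2\}$. Let $X\subseteq\mathcal{A}^G$ be a nonempty $G$-shift space, and for $n\ge 0$ let $\gamma_n$ be the number of distinct restrictions $t|_{E_n}$ with $t\in X$. Then the limit $$h(X)=\lim_{n\to\infty}\frac{\ln\gamma_n}{|E_n|}$$ exists (equivalently, the $\limsup$ defining the topological entropy is a limit).
   Context: $G$ is the monoid (identity $e$) generated by $s_1,s_2$ subject only to the relation $s_2s_2=s_2$; each element is represented uniquely by a finite word over $\{s_1,s_2\}$ containing no factor $s_2s_2$, and $|g|$ denotes the length of this word. $E_n=\{g\in G:|g|\le n\}$. For $t\in\mathcal{A}^G$ write $t_g=t(g)$. An $n$-block is a map $\tau:E_n\to\mathcal{A}$; a configuration $t$ accepts $\tau$ if there is $g\in G$ with $t_{gg'}=\tau_{g'}$ for all $g'\in E_n$, and avoids it otherwise. A $G$-shift space is a set $X\subseteq\mathcal{A}^G$ consisting of all configurations that avoid every block in some given set of forbidden blocks. The topological entropy is defined as $h(X)=\limsup_{n\to\infty}\ln\gamma_n/|E_n|$. *)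

(* Defs.v *)
From HB Require Import structures.
From mathcomp Require Import all_boot all_order all_algebra.
From mathcomp Require Import all_classical all_reals all_analysis.
Set Implicit Arguments. Unset Strict Implicit. Unset Printing Implicit Defensive.

(* Words over {s1,s2}: false = s1, true = s2. *)
Fixpoint reduced (w : seq bool) : bool :=
  match w with
  | b :: ((c :: _) as w') => ~~ (b && c) && reduced w'
  | _ => true
  end.

(* The monoid G = <s1,s2 | s2 s2 = s2>, elements = reduced words (normal forms). *)
Definition G := {w : seq bool | reduced w}.

(* normal form: collapse every factor s2 s2 to s2 *)
Fixpoint red (w : seq bool) : seq bool :=
  match w with
  | [::] => [::]
  | b :: w' => let r := red w' in if b && head false r then r else b :: r
  end.

Lemma red_reduced w : reduced (red w).
Proof.
elim: w => [|b w IH] //=.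
case: (red w) IH => [|c r] IH; first by case: b.
by case: b; case: c IH => //= ->.
Qed.

Definition gmul (g h : G) : G := exist _ (red (val g ++ val h)) (red_reduced _).
Definition gone : G := exist _ [::] isT.

Definition glen (g : G) : nat := size (val g).

Definition Esub (n : nat) := {g : G | glen g <= n}.
Definition block (n : nat) := Esub n -> bool.

(* alphabet A = {1,2}, encoded as bool *)
Definition config := G -> bool.

Definition accepts (t : config) (n : nat) (tau : block n) : Prop :=
  exists g : G, forall g' : Esub n, t (gmul g (val g')) = tau g'.

Definition shift (F : forall n : nat, set (block n)) : set config :=
  [set t | forall (n : nat) (tau : block n), F n tau -> ~ accepts t tau].

Definition is_shift_space (X : set config) : Prop :=
  exists F : forall n : nat, set (block n), X = shift F.

(* explicit duplicate-free enumeration of E_n *)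
Definition words (n : nat) : seq (seq bool) :=
  flatten [seq [seq val x | x <- enum {: k.-tuple bool}] | k <- iota 0 n.+1].
Definition Elist (n : nat) : seq G := pmap (fun w => (insub w : option G)) (words n).

Definition card_En (n : nat) : nat := size (Elist n).

(* t|_{E_n}, as the tuple of values along the enumeration of E_n *)
Definition restr (t : config) (n : nat) : (card_En n).-tuple bool :=
  map_tuple t (in_tuple (Elist n)).

Definition n_patterns (X : set config) (n : nat) : nat :=
  #|[set p : (card_En n).-tuple bool | `[< exists2 t, X t & restr t n = p >] ]|.

(* Main.v *)
Require Import Defs.
From HB Require Import structures.
From mathcomp Require Import all_boot all_order all_algebra.
From mathcomp Require Import all_classical all_reals all_analysis.
From mathcomp Require Import ring lra zify.
Import Order.TTheory GRing.Theory Num.Theory numFieldNormedType.Exports.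
Local Open Scope classical_set_scope.
Local Open Scope ring_scope.

Definition fcons (b : bool) (r : seq bool) := if b && head false r then r else b :: r.

Lemma redE b w : red (b :: w) = fcons b (red w).
Proof. by []. Qed.

Lemma head_red b w : head false (red (b :: w)) = b.
Proof. rewrite redE /fcons; case: b => //=; by case: ifP. Qed.

Lemma reduced_tl b w : reduced (b :: w) -> reduced w.
Proof. by case: w => //= c w /andP[]. Qed.

Lemma red_id w : reduced w -> red w = w.
Proof.
elim: w => [|b w IH] //= Hw.
rewrite (IH (@reduced_tl b w Hw)).
case: w Hw {IH} => [|c w] /=; first by rewrite andbF.
by case/andP => /negbTE -> _.
Qed.

Lemma fcons_red b r v : reduced r -> red (fcons b r ++ v) = fcons b (red (r ++ v)).
Proof.
rewrite /fcons; case: b => //=.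
case: r => [|c r] //= Hr.
case: c Hr => //= Hr.
by rewrite head_red.
Qed.

Lemma redCl u v : red (red u ++ v) = red (u ++ v).
Proof.
elim: u => [|b u IH] //=.
by rewrite fcons_red ?red_reduced // IH.
Qed.

Lemma redCr u v : red (u ++ red v) = red (u ++ v).
Proof.
elim: u => [|b u IH] /=; first by rewrite red_id // red_reduced.
by rewrite IH.
Qed.

Lemma gmulA (a b c : G) : gmul a (gmul b c) = gmul (gmul a b) c.
Proof. apply: val_inj => /=. by rewrite redCr redCl catA. Qed.

Lemma shift_inv (F : forall n : nat, set (block n)) (t : config) (g0 : G) :
  Defs.shift F t -> Defs.shift F (fun h => t (gmul g0 h)).
Proof.
move=> Ht n tau Ftau [g Hg]; apply: (Ht n tau Ftau).
exists (gmul g0 g) => g'; by rewrite -gmulA Hg.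
Qed.

Lemma mem_words w n : (w \in words n) = (size w <= n)%N.
Proof.
apply/idP/idP.
  case/flatten_mapP => k; rewrite mem_iota add0n => Hk /mapP [x _ ->].
  by rewrite size_tuple -ltnS.
move=> Hw; apply/flatten_mapP; exists (size w); first by rewrite mem_iota add0n ltnS.
apply/mapP; exists (@Tuple _ bool w (eqxx _)) => //.
by rewrite mem_enum.
Qed.

Lemma mem_Elist (g : G) n : (g \in Elist n) = (glen g <= n)%N.
Proof. by rewrite /Elist mem_pmap_sub mem_words. Qed.

Lemma words_S n : words n.+1 = words n ++ [seq val x | x <- enum {: n.+1.-tuple bool}].
Proof.
by rewrite /words -addn1 iotaD map_cat flatten_cat /= cats0.
Qed.

Lemma uniq_words n : uniq (words n).
Proof.
elim: n => [|n IH].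
  by rewrite /words /= cats0 (map_inj_uniq val_inj) enum_uniq.
rewrite words_S cat_uniq IH (map_inj_uniq val_inj) enum_uniq andbT /=.
apply/hasPn => w /mapP [x _ ->]; by rewrite mem_words size_tuple ltnn.
Qed.

Lemma uniq_Elist n : uniq (Elist n).
Proof. exact: pmap_sub_uniq (uniq_words n). Qed.

Definition s1 : G := exist _ [:: false] isT.
Definition s2 : G := exist _ [:: true] isT.
Definition s21 : G := exist _ [:: true; false] isT.

Lemma val_s1 h : val (gmul s1 h) = false :: val h.
Proof. by rewrite /= red_id //; case: h. Qed.

Lemma val_s21 h : val (gmul s21 h) = true :: false :: val h.
Proof. by rewrite /= red_id //; case: h. Qed.

Lemma decomp (g : G) n : (glen g <= n.+2)%N ->
  [\/ g = gone, g = s2, exists2 h, (glen h <= n.+1)%N & g = gmul s1 h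
    | exists2 h, (glen h <= n)%N & g = gmul s21 h].
Proof.
case: g => w Hw; rewrite /glen /=.
case: w Hw => [|b w] Hw Hs.
  by apply: Or41; apply: val_inj.
case: b Hw Hs => Hw Hs.
  case: w Hw Hs => [|c w] Hw Hs; first by apply: Or42; apply: val_inj.
  case: c Hw Hs => Hw Hs; first by [].
  have Hr : reduced w by apply: (@reduced_tl false w); apply: (@reduced_tl true _ Hw).
  apply: Or44; exists (exist _ w Hr); first by rewrite /glen /=; move: Hs; rewrite /= !ltnS.
  by apply: val_inj; rewrite val_s21.
have Hr : reduced w by apply: (@reduced_tl false w).
apply: Or43; exists (exist _ w Hr); first by rewrite /glen /=.
by apply: val_inj; rewrite val_s1.
Qed.

Lemma card_pos n : (0 < card_En n)%N.
Proof. rewrite /card_En -has_predT; apply/hasP; exists gone => //; by rewrite mem_Elist. Qed.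

Lemma nseq_red n : reduced (nseq n false).
Proof. elim: n => [|n IH] //=; case: n IH => //. Qed.

Lemma card_S n : (card_En n < card_En n.+1)%N.
Proof.
set gw : G := exist _ (nseq n.+1 false) (nseq_red _).
have := @uniq_leq_size _ (gw :: Elist n) (Elist n.+1).
rewrite /= uniq_Elist mem_Elist /glen /= size_nseq ltnn /=; apply => //.
move=> x; rewrite inE => /orP [/eqP -> | ]; rewrite !mem_Elist.
  by rewrite /glen /= size_nseq.
by move=> H; apply: leq_trans H _.
Qed.

Lemma card_SS n : (card_En n.+1 + card_En n <= card_En n.+2)%N.
Proof.
have := @uniq_leq_size _ ([seq gmul s1 h | h <- Elist n.+1] ++ [seq gmul s21 h | h <- Elist n]) (Elist n.+2).
rewrite size_cat !size_map; apply.
  rewrite cat_uniq; apply/and3P; split.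
  - rewrite map_inj_uniq ?uniq_Elist //.
    by move=> a b /(congr1 val); rewrite !val_s1 => [[]] /val_inj.
  - apply/hasPn => x /mapP [h _ ->]; apply/mapP => [[h' _ /(congr1 val)]].
    by rewrite val_s1 val_s21.
  - rewrite map_inj_uniq ?uniq_Elist //.
    by move=> a b /(congr1 val); rewrite !val_s21 => [[]] /val_inj.
move=> x; rewrite mem_cat => /orP [] /mapP [h]; rewrite !mem_Elist => Hh ->;
  rewrite /glen ?val_s1 ?val_s21 /=; rewrite /glen in Hh; by rewrite ?ltnS // ltnW.
Qed.

Lemma restr_eq (t t' : config) n : {in Elist n, t =1 t'} -> restr t n = restr t' n.
Proof. by move=> H; apply: val_inj => /=; apply/eq_in_map. Qed.

Lemma restr_eq_inv (t t' : config) n : restr t n = restr t' n -> {in Elist n, t =1 t'}.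
Proof. by move=> /(congr1 val) /= H; apply/eq_in_map. Qed.

Definition Pn (X : set config) n : {set (card_En n).-tuple bool} :=
  [set p : (card_En n).-tuple bool | `[< exists2 t, X t & restr t n = p >] ]%SET.

Lemma Pn_mem (X : set config) n t : X t -> restr t n \in Pn X n.
Proof. by move=> Xt; rewrite inE; apply/asboolP; exists t. Qed.

Lemma gamma_rec (X : set config) n : is_shift_space X ->
  (n_patterns X n.+2 <= 4 * n_patterns X n.+1 * n_patterns X n)%N.
Proof.
case=> F XF.
have : forall p : (card_En n.+2).-tuple bool, exists t : config,
    p \in Pn X n.+2 -> X t /\ restr t n.+2 = p.
  move=> p; case: (pselect (p \in Pn X n.+2)) => Hp; last by exists (fun _ => false).
  move: (Hp); rewrite inE => /asboolP [t Xt Et]; by exists t.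
case/choice => f Hf.
pose phi p := let t := f p in
  (t gone, t s2, restr (fun h => t (gmul s1 h)) n.+1, restr (fun h => t (gmul s21 h)) n).
have inj : {in Pn X n.+2 &, injective phi}.
  move=> p q Hp Hq; rewrite /phi => -[E1 E2 E3 E4].
  case: (Hf p Hp) => _ <-; case: (Hf q Hq) => _ <-.
  apply: restr_eq => g; rewrite mem_Elist => /decomp [->|->|[h Hh ->]|[h Hh ->]] //.
    by move/eq_in_map: E3 => /(_ h); apply; rewrite mem_Elist.
  by move/eq_in_map: E4 => /(_ h); apply; rewrite mem_Elist.
rewrite /n_patterns -/(Pn X n.+2) -/(Pn X n.+1) -/(Pn X n).
have Hc : #|phi @: Pn X n.+2| = #|Pn X n.+2| by apply: card_in_imset.
rewrite -Hc.
have -> : (4 * #|Pn X n.+1| * #|Pn X n| =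
   #|finset.setX (finset.setX (finset.setX [set: bool] [set: bool]) (Pn X n.+1)) (Pn X n)|)%N.
  by rewrite !cardsX cardsT card_bool.
apply: subset_leq_card; apply/fintype.subsetP => x /imsetP [p Hp ->].
have [Xt _] := Hf p Hp.
have XS : forall g0, X (fun h => f p (gmul g0 h)).
  by move=> g0; rewrite XF; apply: shift_inv; rewrite -XF.
by rewrite /phi !finset.in_setX !finset.in_setT !Pn_mem.
Qed.

Lemma mler (R : realType) (z x y : R) : 0 <= z -> x <= y -> x * z <= y * z.
Proof. by move=> h1 h2; have := ler_wpM2r h1 h2. Qed.
Lemma mlel (R : realType) (z x y : R) : 0 <= z -> x <= y -> z * x <= z * y.
Proof. by move=> h1 h2; have := ler_wpM2l h1 h2. Qed.

Lemma key (R : realType) (u c : nat -> R) :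
  (forall n, 0 <= u n) -> (forall n, 0 < c n) -> (forall n, c n <= c n.+1) ->
  (forall n, c n.+1 + c n <= c n.+2) -> (forall n, u n.+2 <= u n.+1 + u n) ->
  exists l : R, (fun n : nat => u n / c n) @ \oo --> l.
Proof.
move=> u0 c0 cS cSS uSS.
pose a n := u n / c n.
have a0 n : 0 <= a n by rewrite /a divr_ge0 // ltW.
have ua n : u n = a n * c n by rewrite /a divfK // gt_eqF.
pose M n := Num.max (a n.+1) (a n).
have Ma1 n : a n.+1 <= M n by rewrite /M /= le_max lexx.
have Ma2 n : a n <= M n by rewrite /M /= le_max lexx orbT.
have M0 n : 0 <= M n by apply: le_trans (Ma2 n).
have aM n : a n.+2 <= M n.
  rewrite /a ler_pdivrMr // (le_trans (uSS n)) //.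
  have h1 : u n.+1 <= M n * c n.+1 by rewrite ua; apply: mler (ltW (c0 _)) (Ma1 n).
  have h2 : u n <= M n * c n by rewrite ua; apply: mler (ltW (c0 _)) (Ma2 n).
  have h3 : M n * (c n.+1 + c n) <= M n * c n.+2 by apply: mlel.
  rewrite mulrDr in h3; lra.
have MS n : M n.+1 <= M n by rewrite /M /= ge_max aM Ma1.
have Mdec n k : M (n + k)%N <= M n.
  elim: k => [|k IH]; first by rewrite addn0.
  by rewrite addnS (le_trans (MS _)).
have Mhomo : {homo M : n m / (n <= m)%N >-> m <= n}.
  by move=> n m nm; rewrite -(subnKC nm) Mdec.
have lb : has_lbound (range M) by exists 0 => x [n _ <-].
have HM := nonincreasing_cvgn Mhomo lb.
set L := inf (range M) in HM.
have LM n : L <= M n.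
  have := nonincreasing_cvgn_ge Mhomo (cvgP _ HM) n.
  by rewrite (cvg_lim _ HM).
have L0 : 0 <= L.
  rewrite -(cvg_lim _ HM) //; apply: limr_ge; [exact: cvgP HM | exact: nearW].

have lo n : L + (L - M n) <= a n.+1.
  have [h|h] := leP L (a n.+1); first by have := LM n; lra.
  have h2 : L <= a n.+2 by have := LM n.+1; rewrite /M /= le_max => /orP [//|h0]; lra.
  have e1 : L * c n.+2 <= c n.+1 * a n.+1 + c n * a n.
    have : L * c n.+2 <= u n.+2 by rewrite ua; apply: mler (ltW (c0 _)) h2.
    have := uSS n; rewrite !ua; lra.
  have e2 : L * (c n.+1 + c n) <= L * c n.+2 by apply: mlel.
  have e3 : c n * a n <= c n * M n by apply: mlel (ltW (c0 _)) (Ma2 n).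
  have e4 : c n * (L - M n) >= c n.+1 * (L - M n).
    by have := cS n; have := LM n; nra.
  have e5 : c n.+1 * (L + (L - M n)) <= c n.+1 * a n.+1.
    lra.
  by rewrite ler_pM2l in e5.
exists L; rewrite -(cvg_shiftn 1) /=.
apply: (@squeeze_cvgr _ _ _ _ (fun n => L + (L - M n)) (fun n => M n)).
- apply: nearW => n; rewrite addn1 lo /=.
  by rewrite Ma1.
- rewrite -[X in _ --> X]addr0 -[X in _ + X](subrr L).
  apply: cvgD; first exact: cvg_cst.
  apply: cvgB => //; exact: cvg_cst.
- exact: HM.
Qed.

Lemma card_ge n : (n < card_En n)%N.
Proof. elim: n => [|n IH]; first exact: card_pos. exact: leq_ltn_trans IH (card_S n). Qed.

Theorem theorem1 (R : realType) (X : set config) :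
  is_shift_space X -> X !=set0 ->
  exists l : R,
    (fun n : nat => ln ((n_patterns X n)%:R : R) / ((card_En n)%:R : R)) @ \oo --> l.
Proof.
move=> Hs [t0 Xt0].
have g1 n : (0 < n_patterns X n)%N.
  rewrite /n_patterns -/(Pn X n); apply/card_gt0P; exists (restr t0 n); exact: Pn_mem.
pose u n : R := ln ((4 * n_patterns X n)%:R).
pose c n : R := (card_En n)%:R.
have c0 n : 0 < c n by rewrite /c ltr0n card_pos.
have [l Hl] : exists l : R, (fun n : nat => u n / c n) @ \oo --> l.
  apply: key => n.
  - by rewrite /u ln_ge0 // ler1n muln_gt0 g1.
  - exact: c0.
  - by rewrite /c ler_nat ltnW // card_S.
  - by rewrite /c -natrD ler_nat card_SS.
  - rewrite /u -lnM ?posrE ?ltr0n ?muln_gt0 ?g1 // -natrM ler_ln ?posrE ?ltr0n ?muln_gt0 ?g1 //.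
    rewrite ler_nat; have := @gamma_rec X n Hs; nia.
exists (l - ln 4 * 0).
have -> : (fun n : nat => ln ((n_patterns X n)%:R : R) / ((card_En n)%:R : R)) =
          (fun n : nat => u n / c n - ln 4 * (c n)^-1).
  apply: funext => n; rewrite /u /c natrM lnM ?posrE ?ltr0n ?g1 //.
  by rewrite mulrDl; ring.
apply: cvgB => //.
apply: cvgM; first exact: cvg_cst.
apply: (@squeeze_cvgr _ _ _ _ (fun _ => 0) (fun n => harmonic n)).
- apply: nearW => n /=; rewrite invr_ge0 ltW //= lef_pV2 ?posrE ?ltr0n ?card_pos //.
  by rewrite /c ler_nat card_ge.
- exact: cvg_cst.
- exact: cvg_harmonic.
Qed.
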